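(* For every set $\mathcal{E}\subseteq\Lambda_s$ of simple terms, the following are equivalent: (1) $\mathcal{E}$ is a maximal clique (with respect to the coherence relation $\frown$) having finite height; (2) there exists a $\lambda$-term $M\in\Lambda$ such that $\mathcal{E}=\mathcal{T}(M)$.
   Context: Call-by-value resource calculus. Resource values $u,v::=x\mid \lambda x.t$; simple terms $s,t::= st\mid [v_1,\dots,v_k]$ ($k\ge0$, bags are finite multisets); resource terms $e::=v\mid s$. $\Lambda_s$ is the set of simple terms, $\Lambda_r$ the set of resource terms. Height: $\mathrm{ht}(x)=0$, $\mathrm{ht}(\lambda x.t)=\mathrm{ht}(t)+1$, $\mathrm{ht}(st)=\max\{\mathrm{ht}(s),\mathrm{ht}(t)\}+1$, $\mathrm{ht}([v_1,\dots,v_k])=\max\{\mathrm{ht}(v_i)\}+1$. The height of a non-empty set of resource terms is the maximal height of its elements if it exists (the set then has finite height), and $\aleph_0$ otherwise. The coherence relation $\frown\subseteq\Lambda_r\times\Lambda_r$ is the smallest relation such that: $x\frown x$; $\lambda x.s\frown\lambda x.t$ whenever $s\frown t$; $[v_1,\dots,v_k]\frown[v_{k+1},\dots,v_n]$ whenever $v_i\frown v_j$ for all $i,j\le n$; $s_1t_1\frown s_2t_2$ whenever $s_1\frown s_2$ and $t_1\frown t_2$. A set $\mathcal{E}\subseteq\Lambda_r$ is a clique if $e\frown e'$ for all $e,e'\in\mathcal{E}$, and a clique is maximal if for every $e\in\Lambda_r$, $\mathcal{E}\cup\{e\}$ being a clique entails $e\in\mathcal{E}$. The (call-by-value) Taylor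 expansion $\mathcal{T}(M)\subseteq\Lambda_s$ of a $\lambda$-term is defined by $\mathcal{T}(x)=\{[x^n]\mid n\ge0\}$ (where $[x^n]$ is the bag with $n$ copies of $x$), $\mathcal{T}(\lambda x.N)=\{[\lambda x.t_1,\dots,\lambda x.t_n]\mid n\ge0,\ t_i\in\mathcal{T}(N)\}$, $\mathcal{T}(PQ)=\{st\mid s\in\mathcal{T}(P),t\in\mathcal{T}(Q)\}$. *)

(* Defs.v *)
(* Call-by-value resource calculus, de Bruijn syntax. *)
From Stdlib Require Import List Arith.
Import ListNotations.

(* lambda-terms (de Bruijn indices, so alpha-equivalence is syntactic equality) *)
Inductive lterm : Type :=
| Var : nat -> lterm
| Lam : lterm -> lterm
| App : lterm -> lterm -> lterm.

(* Bags are represented by lists (sets of terms are predicates,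
   and all notions below are invariant under permutation of bags). *)
Inductive rval : Type :=
| RVar : nat -> rval
| RLam : sterm -> rval
with sterm : Type :=
| SApp : sterm -> sterm -> sterm
| SBag : list rval -> sterm.

Definition rterm : Type := (rval + sterm)%type.

Fixpoint ht_v (v : rval) : nat :=
  match v with
  | RVar _ => 0
  | RLam t => S (ht_s t)
  end
with ht_s (s : sterm) : nat :=
  match s with
  | SApp s t => S (Nat.max (ht_s s) (ht_s t))
  | SBag l => S (fold_right (fun v m => Nat.max (ht_v v) m) 0 l)
  end.

Definition ht (e : rterm) : nat :=
  match e with inl v => ht_v v | inr s => ht_s s end.

Inductive coh_v : rval -> rval -> Prop :=
| coh_var x : coh_v (RVar x) (RVar x)
| coh_lam s t : coh_s s t -> coh_v (RLam s) (RLam t)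
with coh_s : sterm -> sterm -> Prop :=
| coh_bag l1 l2 :
    (forall u v, In u (l1 ++ l2) -> In v (l1 ++ l2) -> coh_v u v) ->
    coh_s (SBag l1) (SBag l2)
| coh_app s1 t1 s2 t2 :
    coh_s s1 s2 -> coh_s t1 t2 -> coh_s (SApp s1 t1) (SApp s2 t2).

Definition coh (e e' : rterm) : Prop :=
  match e, e' with
  | inl u, inl v => coh_v u v
  | inr s, inr t => coh_s s t
  | _, _ => False
  end.

Definition is_clique (E : rterm -> Prop) : Prop :=
  forall e e', E e -> E e' -> coh e e'.

Definition is_maximal_clique (E : rterm -> Prop) : Prop :=
  is_clique E /\
  forall e : rterm, is_clique (fun e' => E e' \/ e' = e) -> E e.

Definition as_rterms (E : sterm -> Prop) : rterm -> Prop :=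
  fun e => match e with inl _ => False | inr s => E s end.

(* finite height: the heights of the elements are bounded (so the maximum exists) *)
Definition finite_height (E : rterm -> Prop) : Prop :=
  exists n, forall e, E e -> ht e <= n.

Fixpoint taylor (M : lterm) : sterm -> Prop :=
  match M with
  | Var x => fun s => exists n, s = SBag (repeat (RVar x) n)
  | Lam N => fun s => exists l : list sterm,
               Forall (taylor N) l /\ s = SBag (map RLam l)
  | App P Q => fun s => exists s1 t1,
               s = SApp s1 t1 /\ taylor P s1 /\ taylor Q t1
  end.

(* Main.v *)
Require Import Defs.
From Stdlib Require Import List Arith Lia Classical.
Import ListNotations.

Scheme coh_v_ind2 := Induction for coh_v Sort Prop
with coh_s_ind2 := Induction for coh_s Sort Prop.

Lemma coh_sym_s : forall s t, coh_s s t -> coh_s t s.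
Proof.
  apply (coh_s_ind2 (fun u v _ => coh_v v u) (fun s t _ => coh_s t s)).
  - intros; constructor.
  - intros s t _ IH; constructor; auto.
  - intros l1 l2 H IH. constructor. intros u v Hu Hv.
    apply in_app_iff in Hu, Hv.
    assert (Hu' : In u (l1 ++ l2)) by (apply in_app_iff; tauto).
    assert (Hv' : In v (l1 ++ l2)) by (apply in_app_iff; tauto).
    exact (IH v u Hv' Hu').
  - intros; constructor; auto.
Qed.

Definition clique (S : sterm -> Prop) := forall s t, S s -> S t -> coh_s s t.
Definition maxc (S : sterm -> Prop) :=
  clique S /\ forall u, (forall s, S s -> coh_s u s) -> coh_s u u -> S u.
Definition bnd (S : sterm -> Prop) n := forall s, S s -> ht_s s <= n.

Lemma list_repeat (l : list rval) c : (forall a, In a l -> a = c) -> l = repeat c (length l).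
Proof.
  induction l; simpl; intros H; auto.
  rewrite (H a (or_introl eq_refl)), IHl; auto.
  rewrite repeat_length. reflexivity.
Qed.

Lemma list_lam (l : list rval) (P : sterm -> Prop) :
  (forall a, In a l -> exists t, a = RLam t /\ P t) ->
  exists l', l = map RLam l' /\ Forall P l'.
Proof.
  induction l; simpl; intros H.
  - exists []; auto.
  - destruct (H a (or_introl eq_refl)) as [t [-> Ht]].
    destruct IHl as [l' [-> Hl']]; auto.
    exists (t :: l'); simpl; auto.
Qed.

Lemma fold_bound (l : list rval) m :
  (forall v, In v l -> ht_v v <= m) ->
  fold_right (fun v m => Nat.max (ht_v v) m) 0 l <= m.
Proof.
  induction l; simpl; intros H; [lia|].
  pose proof (H a (or_introl eq_refl)). specialize (IHl (fun v h => H v (or_intror h))).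
  lia.
Qed.

Lemma fold_ge (l : list rval) v :
  In v l -> ht_v v <= fold_right (fun v m => Nat.max (ht_v v) m) 0 l.
Proof.
  induction l; simpl; intros H; [contradiction|].
  destruct H as [->|H]; [lia|]. specialize (IHl H); lia.
Qed.

Lemma ht_lam_in l t : In (RLam t) l -> ht_s t + 2 <= ht_s (SBag l).
Proof. intros H. apply fold_ge in H. simpl in *. lia. Qed.

Lemma inv_bag_r u l : coh_s u (SBag l) ->
  exists l1, u = SBag l1 /\ forall a b, In a (l1 ++ l) -> In b (l1 ++ l) -> coh_v a b.
Proof. intros H; inversion H; subst; eauto. Qed.
Lemma inv_bag l1 l : coh_s (SBag l1) (SBag l) ->
  forall a b, In a (l1 ++ l) -> In b (l1 ++ l) -> coh_v a b.
Proof. intros H; inversion H; subst; eauto. Qed.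
Lemma inv_app_r u a b : coh_s u (SApp a b) ->
  exists c d, u = SApp c d /\ coh_s c a /\ coh_s d b.
Proof. intros H; inversion H; subst; eauto. Qed.
Lemma inv_app a b c d : coh_s (SApp a b) (SApp c d) -> coh_s a c /\ coh_s b d.
Proof. intros H; inversion H; subst; eauto. Qed.
Lemma inv_lam s t : coh_v (RLam s) (RLam t) -> coh_s s t.
Proof. intros H; inversion H; subst; eauto. Qed.
Lemma inv_var_r a x : coh_v a (RVar x) -> a = RVar x.
Proof. intros H; inversion H; subst; eauto. Qed.
Lemma inv_lam_r a t : coh_v a (RLam t) -> exists s, a = RLam s /\ coh_s s t.
Proof. intros H; inversion H; subst; eauto. Qed.

Lemma taylor_nonempty M : exists s, taylor M s.
Proof.
  induction M; simpl.
  - exists (SBag []); exists 0; reflexivity.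
  - exists (SBag []); exists []; simpl; auto.
  - destruct IHM1 as [a Ha], IHM2 as [b Hb]. exists (SApp a b), a, b; auto.
Qed.

Lemma taylor_lam_in N l a : Forall (taylor N) l -> In a (map RLam l) ->
  exists t, a = RLam t /\ taylor N t.
Proof.
  intros HF Ha. apply in_map_iff in Ha. destruct Ha as [t [<- Ht]].
  exists t; split; auto. rewrite Forall_forall in HF; auto.
Qed.

Lemma taylor_clique M : clique (taylor M).
Proof.
  induction M; intros s t Hs Ht; simpl in Hs, Ht.
  - destruct Hs as [k ->], Ht as [m ->]. constructor.
    intros u v Hu Hv. apply in_app_iff in Hu, Hv.
    destruct Hu as [Hu|Hu]; apply repeat_spec in Hu;
    destruct Hv as [Hv|Hv]; apply repeat_spec in Hv; subst; constructor.
  - destruct Hs as [l1 [H1 ->]], Ht as [l2 [H2 ->]]. constructor.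
    intros u v Hu Hv. rewrite <- map_app in Hu, Hv.
    assert (HF : Forall (taylor M) (l1 ++ l2)) by (apply Forall_app; auto).
    destruct (taylor_lam_in _ _ _ HF Hu) as [a [-> Ha]].
    destruct (taylor_lam_in _ _ _ HF Hv) as [b [-> Hb]].
    constructor. apply IHM; auto.
  - destruct Hs as [a [b [-> [Ha Hb]]]], Ht as [c [d [-> [Hc Hd]]]].
    constructor; [apply IHM1|apply IHM2]; auto.
Qed.

Lemma taylor_max M : forall u, (forall s, taylor M s -> coh_s u s) -> coh_s u u -> taylor M u.
Proof.
  induction M; intros u H Hu; simpl.
  - assert (Hx : taylor (Var n) (SBag [RVar n])) by (exists 1; reflexivity).
    destruct (inv_bag_r _ _ (H _ Hx)) as [l1 [-> H2]].
    exists (length l1). f_equal. apply list_repeat. intros a Ha.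
    apply inv_var_r. apply H2; apply in_app_iff; simpl; auto.
  - destruct (taylor_nonempty M) as [t0 Ht0].
    assert (Hx : forall t, taylor M t -> coh_s u (SBag [RLam t])).
    { intros t Ht. apply H. exists [t]; simpl; auto. }
    destruct (inv_bag_r _ _ (Hx t0 Ht0)) as [l1 [-> H2]].
    destruct (list_lam l1 (taylor M)) as [l' [-> Hl']].
    + intros a Ha.
      assert (Hc : coh_v a (RLam t0)) by (apply H2; apply in_app_iff; simpl; auto).
      destruct (inv_lam_r _ _ Hc) as [s [-> _]]. exists s; split; auto.
      apply IHM.
      * intros t Ht. apply inv_lam. apply (inv_bag _ _ (Hx t Ht)); apply in_app_iff; simpl; auto.
      * apply inv_lam. apply (inv_bag _ _ Hu); apply in_app_iff; simpl; auto.
    + exists l'; auto.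
  - destruct (taylor_nonempty M1) as [a0 Ha0], (taylor_nonempty M2) as [b0 Hb0].
    assert (H0 : coh_s u (SApp a0 b0)) by (apply H; exists a0, b0; auto).
    destruct (inv_app_r _ _ _ H0) as [s1 [t1 [-> _]]].
    destruct (inv_app _ _ _ _ Hu) as [Hu1 Hu2].
    exists s1, t1; repeat split; auto.
    + apply IHM1; auto. intros s Hs.
      assert (H1 : coh_s (SApp s1 t1) (SApp s b0)) by (apply H; exists s, b0; auto).
      apply (inv_app _ _ _ _ H1).
    + apply IHM2; auto. intros s Hs.
      assert (H1 : coh_s (SApp s1 t1) (SApp a0 s)) by (apply H; exists a0, s; auto).
      apply (inv_app _ _ _ _ H1).
Qed.

Lemma taylor_bnd M : exists n, bnd (taylor M) n.
Proof.
  induction M; unfold bnd; simpl.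
  - exists 1. intros s [k ->]. simpl.
    assert (fold_right (fun v m => Nat.max (ht_v v) m) 0 (repeat (RVar n) k) <= 0); [|lia].
    apply fold_bound. intros v Hv. apply repeat_spec in Hv; subst; simpl; lia.
  - destruct IHM as [n Hn]. exists (S (S n)). intros s [l [Hl ->]]. simpl.
    apply le_n_S. apply fold_bound. intros v Hv.
    destruct (taylor_lam_in _ _ _ Hl Hv) as [t [-> Ht]]. simpl. specialize (Hn t Ht). lia.
  - destruct IHM1 as [n1 H1], IHM2 as [n2 H2]. exists (S (Nat.max n1 n2)).
    intros s [a [b [-> [Ha Hb]]]]. simpl. specialize (H1 a Ha). specialize (H2 b Hb). lia.
Qed.

Lemma ht_pos s : 1 <= ht_s s.
Proof. destruct s; simpl; lia. Qed.

Lemma bag_coh_F (F : sterm -> Prop) l1 l2 : clique F ->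
  (forall a, In a (l1 ++ l2) -> exists t, a = RLam t /\ F t) ->
  coh_s (SBag l1) (SBag l2).
Proof.
  intros HF H. constructor. intros u v Hu Hv.
  destruct (H u Hu) as [t [-> Ht]], (H v Hv) as [t' [-> Ht']].
  constructor. apply HF; auto.
Qed.

Lemma bag_coh_x x l1 l2 :
  (forall a, In a (l1 ++ l2) -> a = RVar x) -> coh_s (SBag l1) (SBag l2).
Proof.
  intros H. constructor. intros u v Hu Hv.
  rewrite (H u Hu), (H v Hv). constructor.
Qed.

Lemma lemB n : forall E, maxc E -> bnd E n -> exists M, forall s, E s <-> taylor M s.
Proof.
  induction n; intros E [HC HM] HB.
  - exfalso. destruct (classic (exists s, E s)) as [[s Hs]|Hn].
    + specialize (HB s Hs). pose proof (ht_pos s). lia.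
    + apply Hn. exists (SBag []). apply HM.
      * intros s Hs. exfalso; apply Hn; eauto.
      * constructor. intros u v Hu; destruct Hu.
  - destruct (classic (exists s, E s)) as [[s0 Hs0]|Hn].
    2:{ exfalso. apply Hn. exists (SBag []). apply HM.
        * intros s Hs. exfalso; apply Hn; eauto.
        * constructor. intros u v Hu; destruct Hu. }
    destruct s0 as [a0 b0 | l0].
    +
      assert (HE : forall s, E s -> exists a b, s = SApp a b).
      { intros s Hs. destruct (inv_app_r _ _ _ (HC s _ Hs Hs0)) as [c [d [-> _]]]. eauto. }
      set (A := fun a => exists b, E (SApp a b)).
      set (B := fun b => exists a, E (SApp a b)).
      assert (CA : clique A).
      { intros a a' [b Hb] [b' Hb']. apply (inv_app _ _ _ _ (HC _ _ Hb Hb')). }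
      assert (CB : clique B).
      { intros b b' [a Hb] [a' Hb']. apply (inv_app _ _ _ _ (HC _ _ Hb Hb')). }
      assert (MA : maxc A).
      { split; auto. intros u Hu Huu. exists b0. apply HM.
        - intros s Hs. destruct (HE s Hs) as [a [b ->]].
          constructor; [apply Hu; exists b; auto | apply CB; [exists a0|exists a]; auto].
        - constructor; auto. apply CB; exists a0; auto. }
      assert (MB : maxc B).
      { split; auto. intros u Hu Huu. exists a0. apply HM.
        - intros s Hs. destruct (HE s Hs) as [a [b ->]].
          constructor; [apply CA; [exists b0|exists b]; auto | apply Hu; exists a; auto].
        - constructor; auto. apply CA; exists b0; auto. }
      destruct (IHn A MA) as [P HP].
      { intros a [b Hb]. specialize (HB _ Hb). simpl in HB. lia. }
      destruct (IHn B MB) as [Q HQ].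
      { intros b [a Hb]. specialize (HB _ Hb). simpl in HB. lia. }
      exists (App P Q). intros s. split.
      * intros Hs. destruct (HE s Hs) as [a [b ->]]. exists a, b. split; auto.
        split; [apply HP; exists b | apply HQ; exists a]; auto.
      * intros [a [b [-> [Ha Hb]]]]. apply HP in Ha. apply HQ in Hb.
        apply HM.
        -- intros s Hs. destruct (HE s Hs) as [c [d ->]].
           constructor; [apply CA | apply CB]; auto; [exists d|exists c]; auto.
        -- constructor; [apply CA | apply CB]; auto.
    +
      assert (HE : forall s, E s -> exists l, s = SBag l).
      { intros s Hs. destruct (inv_bag_r _ _ (HC s _ Hs Hs0)) as [l [-> _]]. eauto. }
      assert (Key : forall l l' a b, E (SBag l) -> E (SBag l') -> In a l -> In b l' -> coh_v a b).
      { intros l l' a b H1 H2 Ha Hb. apply (inv_bag _ _ (HC _ _ H1 H2)); apply in_app_iff; auto. }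
      destruct (classic (exists l v, E (SBag l) /\ In v l)) as [[l1 [v1 [Hl1 Hv1]]]|Hn].
      2:{ exfalso. apply Hn. exists [RVar 0], (RVar 0). split; [|simpl; auto].
          apply HM.
          - intros s Hs. destruct (HE s Hs) as [l ->]. apply (bag_coh_x 0).
            intros a Ha. apply in_app_iff in Ha. destruct Ha as [[<-|[]]|Ha]; auto.
            exfalso. apply Hn; eauto.
          - apply (bag_coh_x 0). intros a Ha. apply in_app_iff in Ha.
            destruct Ha as [[<-|[]]|[<-|[]]]; auto. }
      destruct v1 as [x | t1].
      *
        assert (Hx : forall l a, E (SBag l) -> In a l -> a = RVar x).
        { intros l a H Ha. apply inv_var_r. exact (Key _ _ _ _ H Hl1 Ha Hv1). }
        exists (Var x). intros s; split.
        -- intros Hs. destruct (HE s Hs) as [l ->]. exists (length l). f_equal.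
           apply list_repeat. intros a Ha; eapply Hx; eauto.
        -- intros [k ->]. apply HM.
           ++ intros s Hs. destruct (HE s Hs) as [l ->]. apply (bag_coh_x x).
              intros a Ha. apply in_app_iff in Ha. destruct Ha as [Ha|Ha].
              ** apply repeat_spec in Ha; auto.
              ** eapply Hx; eauto.
           ++ apply (bag_coh_x x). intros a Ha. apply in_app_iff in Ha.
              destruct Ha as [Ha|Ha]; apply repeat_spec in Ha; auto.
      *
        set (F := fun t => exists l, E (SBag l) /\ In (RLam t) l).
        assert (HL : forall l a, E (SBag l) -> In a l -> exists t, a = RLam t /\ F t).
        { intros l a H Ha. destruct (inv_lam_r _ _ (Key _ _ _ _ H Hl1 Ha Hv1)) as [t [-> _]].
          exists t; split; auto. exists l; auto. }
        assert (CF : clique F).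
        { intros t t' [l [H Ht]] [l' [H' Ht']]. apply inv_lam. exact (Key _ _ _ _ H H' Ht Ht'). }
        assert (MF : maxc F).
        { split; auto. intros u Hu Huu. exists [RLam u]. split; [|simpl; auto].
          apply HM.
          - intros s Hs. destruct (HE s Hs) as [l ->]. constructor.
            assert (G : forall a, In a ([RLam u] ++ l) -> a = RLam u \/ (exists t, a = RLam t /\ F t)).
            { intros a Ha. apply in_app_iff in Ha. destruct Ha as [[<-|[]]|Ha]; auto.
              right; eapply HL; eauto. }
            intros a b Ha Hb.
            destruct (G a Ha) as [->|[t [-> Ht]]], (G b Hb) as [->|[t' [-> Ht']]];
              constructor; auto.
            all: first [solve [apply CF; auto] | apply coh_sym_s; auto].
          - constructor. intros a b Ha Hb. simpl in Ha, Hb.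
            destruct Ha as [<-|[<-|[]]], Hb as [<-|[<-|[]]]; constructor; auto. }
        destruct (IHn F MF) as [N HN].
        { intros t [l [H Ht]]. specialize (HB _ H). apply ht_lam_in in Ht. lia. }
        exists (Lam N). intros s; split.
        -- intros Hs. destruct (HE s Hs) as [l ->].
           destruct (list_lam l F) as [l' [-> Hl']].
           { intros a Ha; eapply HL; eauto. }
           exists l'. split; auto. eapply Forall_impl; [|exact Hl']. intros t Ht; apply HN; auto.
        -- intros [l [Hl ->]].
           assert (HlF : forall a, In a (map RLam l) -> exists t, a = RLam t /\ F t).
           { intros a Ha. destruct (taylor_lam_in _ _ _ Hl Ha) as [t [-> Ht]].
             exists t; split; auto; apply HN; auto. }
           apply HM.
           ++ intros s Hs. destruct (HE s Hs) as [l' ->]. apply (bag_coh_F F); auto.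
              intros a Ha. apply in_app_iff in Ha. destruct Ha as [Ha|Ha]; eauto.
           ++ apply (bag_coh_F F); auto.
              intros a Ha. apply in_app_iff in Ha. destruct Ha as [Ha|Ha]; eauto.
Qed.

Theorem proposition3p18 (E : sterm -> Prop) :
  (is_maximal_clique (as_rterms E) /\ finite_height (as_rterms E)) <->
  (exists M : lterm, forall s : sterm, E s <-> taylor M s).
Proof.
  split.
  - intros [[HC HM] [n Hn]].
    apply (lemB n).
    + split.
      * intros s t Hs Ht. exact (HC (inr s) (inr t) Hs Ht).
      * intros u Hu Huu. apply (HM (inr u)).
        intros e e' He He'.
        destruct He as [He| ->], He' as [He'| ->].
        -- apply HC; auto.
        -- destruct e as [v|s]; [destruct He|]. simpl. apply coh_sym_s, Hu; auto.
        -- destruct e' as [v|s]; [destruct He'|]. simpl. apply Hu; auto.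
        -- exact Huu.
    + intros s Hs. exact (Hn (inr s) Hs).
  - intros [M HM].
    destruct (taylor_bnd M) as [n Hn].
    assert (HCl : is_clique (as_rterms E)).
    { intros [v|s] [v'|t] Hs Ht; try destruct Hs; try destruct Ht.
      simpl. apply (taylor_clique M); apply HM; auto. }
    split; [split|].
    + exact HCl.
    + intros e He. destruct e as [v|u].
      * exfalso. destruct (taylor_nonempty M) as [s0 Hs0].
        apply HM in Hs0. exact (He (inr s0) (inl v) (or_introl Hs0) (or_intror eq_refl)).
      * simpl. apply HM. apply taylor_max.
        -- intros s Hs. apply HM in Hs. exact (He (inr u) (inr s) (or_intror eq_refl) (or_introl Hs)).
        -- exact (He (inr u) (inr u) (or_intror eq_refl) (or_intror eq_refl)).
    + exists n. intros [v|s] Hs; [destruct Hs|]. simpl. apply Hn, HM; auto.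
Qed.
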